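(* For all $m\ge1$, $\bar\delta_{2m,1}=\frac{m}{2(2m-1)}$ and $\bar\delta_{2m+1,1}=\frac{m+1}{2(2m+1)}$.
   Context: For integers $\lambda\ge0$, $d\ge1$, write $\lambda=\sum_{i=1}^d\binom{k_i}{i}$ uniquely with $k_d>\cdots>k_1\ge0$ and set $\lambda^{[d]}=\sum_{i=1}^d\binom{k_i}{i+1}$. For $n>d$ and $0\le\lambda\le\binom nd$ let $\delta_{n,d}(\lambda)=\lambda/\binom nd-\lambda^{[d]}/\binom n{d+1}$, and let $\bar\delta_{n,d}=\max_{0\le\lambda\le\binom nd}\delta_{n,d}(\lambda)$ (the paper denotes this maximum simply by $\delta_{n,d}$ in this part). *)

(* Defs.v *)
From mathcomp Require Import all_boot all_order all_algebra.
Set Implicit Arguments. Unset Strict Implicit. Unset Printing Implicit Defensive.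
Import Order.TTheory GRing.Theory Num.Theory.

(* d-cascade representation of lam: lam = sum_{i=1}^d 'C(k i, i)
   with k d > k (d-1) > ... > k 1 >= 0.  Only k 1, ..., k d matter. *)
Definition cascade (d lam : nat) (k : nat -> nat) : Prop :=
  (forall i, 1 <= i < d -> k i < k i.+1) /\
  lam = \sum_(1 <= i < d.+1) 'C(k i, i).

Definition upper_shadow (d : nat) (k : nat -> nat) : nat :=
  \sum_(1 <= i < d.+1) 'C(k i, i.+1).

Local Open Scope ring_scope.

Definition delta (n d lam : nat) (k : nat -> nat) : rat :=
  lam%:R / ('C(n, d))%:R - (upper_shadow d k)%:R / ('C(n, d.+1))%:R.

Definition is_delta_bar (n d : nat) (x : rat) : Prop :=
  (exists lam k, (lam <= 'C(n, d))%N /\ cascade d lam k /\ delta n d lam k = x) /\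
  (forall lam k, (lam <= 'C(n, d))%N -> cascade d lam k -> delta n d lam k <= x).

(* Main.v *)
Require Import Defs.
From mathcomp Require Import all_boot all_order all_algebra.
From mathcomp Require Import ring lra zify.
Import Order.TTheory GRing.Theory Num.Theory.
Local Open Scope ring_scope.

Lemma bin2_id (n : nat) : ('C(n, 2) * 2 + n = n * n)%N.
Proof.
elim: n => [//|n IH]; rewrite binS bin1.
have -> : (n.+1 * n.+1 = n * n + 2 * n + 1)%N by ring.
rewrite -IH; ring.
Qed.

Lemma casc1 lam k : cascade 1 lam k -> k 1%N = lam.
Proof. by case=> _ ->; rewrite big_nat1 bin1. Qed.

Lemma delta1 n lam k : (2 <= n)%N -> cascade 1 lam k ->
  delta n 1 lam k = lam%:R * (n%:R - lam%:R) / (n%:R * (n%:R - 1)).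
Proof.
move=> hn /casc1 hk; rewrite /delta /upper_shadow big_nat1 hk bin1.
have hc : ('C(lam,2))%:R = (lam%:R * lam%:R - lam%:R) / 2 :> rat.
  have E := congr1 (fun x => x%:R : rat) (bin2_id lam).
  rewrite /= natrD !natrM in E; by rewrite -E; field.
have hC : ('C(n,2))%:R = (n%:R * n%:R - n%:R) / 2 :> rat.
  have E := congr1 (fun x => x%:R : rat) (bin2_id n).
  rewrite /= natrD !natrM in E; by rewrite -E; field.
rewrite hc hC.
have n2 : (2 <= n%:R :> rat) by rewrite (ler_nat _ 2).
by field; apply/and3P; split; apply/eqP; nra.
Qed.

Lemma key n (x : rat) lam k : (2 <= n)%N ->
  lam%:R * (n%:R - lam%:R) <= x * (n%:R * (n%:R - 1)) ->
  cascade 1 lam k -> delta n 1 lam k <= x.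
Proof.
move=> hn H hk; rewrite (@delta1 _ _ _ hn hk).
have n2 : (2 <= n%:R :> rat) by rewrite (ler_nat _ 2).
rewrite ler_pdivrMr; nra.
Qed.

Theorem proposition6p1 (m : nat) (hm : (1 <= m)%N) :
  is_delta_bar (2 * m) 1 (m%:R / (2 * (2 * m%:R - 1))) /\
  is_delta_bar (2 * m + 1) 1 ((m%:R + 1) / (2 * (2 * m%:R + 1))).
Proof.
have m1 : (1 <= m%:R :> rat) by rewrite (ler_nat _ 1).
have ck : cascade 1 m (fun _ => m).
  by split=> [i /andP[a b]|]; [lia|rewrite big_nat1 bin1].
have h2 : (2 <= 2 * m)%N by lia.
have h3 : (2 <= 2 * m + 1)%N by lia.
split; split.
- exists m, (fun _ => m); rewrite bin1; split; first lia; split=> //.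
  rewrite (@delta1 _ _ _ h2 ck) natrM; field; lra.
- move=> lam k _ hk; apply: (@key _ _ _ _ h2) => //; rewrite natrM.
  have -> : m%:R / (2 * (2 * m%:R - 1)) * (2 * m%:R * (2 * m%:R - 1)) = m%:R * m%:R :> rat.
    field; lra.
  have := sqr_ge0 (lam%:R - m%:R : rat); nra.
- exists m, (fun _ => m); rewrite bin1; split; first lia; split=> //.
  rewrite (@delta1 _ _ _ h3 ck) natrD natrM; field; lra.
- move=> lam k _ hk; apply: (@key _ _ _ _ h3) => //; rewrite natrD natrM.
  have -> : (m%:R + 1) / (2 * (2 * m%:R + 1)) * ((2 * m%:R + 1) * (2 * m%:R + 1 - 1)) = m%:R * (m%:R + 1) :> rat.
    field; lra.
  have [hl|hl] := leqP lam m.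
  + have : (lam%:R <= m%:R :> rat) by rewrite ler_nat.
    have : (0 <= lam%:R :> rat) by [].
    nra.
  + have : (m%:R + 1 <= lam%:R :> rat) by rewrite -(natrD _ m 1) ler_nat addn1.
    nra.
Qed.
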